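(* Let $\boldsymbol\lambda$ be a partition with at most $N$ parts, $d_i=\lambda_i+N-i$, and let $F_{ij}\in\mathcal O_{\boldsymbol\lambda}$ be as defined in the context. Set $F_{00}=1$ and $\chi(\alpha)=\sum_{i=0}^NF_{ii}\prod_{j=0}^{N-i-1}(\alpha-j)$. Then $\chi(\alpha)=\prod_{i=1}^N(\alpha-d_i)$.
   Context: A partition with at most $N$ parts is a sequence of integers $\lambda_1\ge\dots\ge\lambda_N\ge0$; $|\boldsymbol\lambda|=\sum\lambda_i$. Put $d_i=\lambda_i+N-i$ and $P=\{d_1,\dots,d_N\}$. Let $\mathcal O_{\boldsymbol\lambda}=\mathbb C[f_{ij}:1\le i\le N,\ 1\le j\le d_i,\ d_i-j\notin P]$ be the polynomial algebra in the indicated variables (the coordinate ring of the Schubert cell of $N$-dimensional spaces of polynomials whose set of degrees is $P$), and let $f_i(u)=u^{d_i}+\sum_{1\le j\le d_i,\ d_i-j\notin P}f_{ij}u^{d_i-j}$. Let $\operatorname{Wr}(g_1,\dots,g_N)=\det(g_i^{(j-1)})_{i,j=1}^N$ be the Wronskian. For a square matrix $A=(a_{ij})$ with possibly noncommuting entries, $\operatorname{rdet}A=\sum_{\sigma}\operatorname{sgn}(\sigma)a_{1\sigma(1)}a_{2\sigma(2)}\cdots$. Let $\partial=d/du$ and define the differential operator $\mathcal D^{\mathcal O}_{\boldsymbol\lambda}=\frac1{\operatorname{Wr}(f_1,\dots,f_N)}\operatorname{rdet}\begin{pmatrix}f_1&f_1'&\dots&f_1^{(N)}\\ \vdots&&&\vdots\\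 f_N&f_N'&\dots&f_N^{(N)}\\ 1&\partial&\dots&\partial^N\end{pmatrix}=\partial^N+\sum_{i=1}^NF_i(u)\partial^{N-i}$. The top coefficient of $\operatorname{Wr}(f_1,\dots,f_N)$ (a polynomial in $u$ over $\mathcal O_{\boldsymbol\lambda}$) is a nonzero constant, so each $F_i(u)$ expands as $F_i(u)=\sum_{j\ge1}F_{ij}u^{-j}$ with $F_{ij}\in\mathcal O_{\boldsymbol\lambda}$. *)

(* Defs.v *)
From HB Require Import structures.
From mathcomp Require Import all_boot all_order all_algebra all_fingroup.
Set Implicit Arguments. Unset Strict Implicit. Unset Printing Implicit Defensive.
Import GRing.Theory.
Local Open Scope ring_scope.

(* Partition lam = (lam_1,...,lam_N), 0-indexed: lam : 'I_N -> nat.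
   d_i = lam_i + N - i (1-indexed) becomes, 0-indexed, lam i + (N-1-i). *)
Definition dseq (N : nat) (lam : 'I_N -> nat) (i : 'I_N) : nat :=
  (lam i + (N.-1 - i))%N.

Definition inP (N : nat) (lam : 'I_N -> nat) (m : nat) : bool :=
  [exists k : 'I_N, dseq lam k == m].

(* f_i(u) = u^{d_i} + sum_{1<=j<=d_i, d_i-j \notin P} f_{ij} u^{d_i-j},
   where the values f i j in R play the role of the generators f_{ij}. *)
Definition fpoly (R : idomainType) (N : nat) (lam : 'I_N -> nat)
    (f : 'I_N -> nat -> R) (i : 'I_N) : {poly R} :=
  'X^(dseq lam i) +
  \sum_(1 <= j < (dseq lam i).+1 | ~~ inP lam (dseq lam i - j)%N)
     (f i j)%:P * 'X^(dseq lam i - j).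

Definition wronskian (R : idomainType) (N : nat) (g : 'I_N -> {poly R})
  : {poly R} :=
  \det (\matrix_(i < N, j < N) (g i)^`(j)).

(* The row-determinant of the (N+1)x(N+1) matrix whose first N rows are
   (g_i, g_i', ..., g_i^{(N)}) and whose last row is (1, d, ..., d^N):
   rdet = sum_s sgn(s) a_{1 s(1)} ... a_{N s(N)} a_{N+1 s(N+1)}
        = sum_s sgn(s) (prod_{i<=N} g_i^{(s(i)-1)}) d^{s(N+1)-1}.
   rdet_coef g k is the (left) coefficient of d^k in this operator. *)
Definition rdet_coef (R : idomainType) (N : nat) (g : 'I_N -> {poly R})
    (k : nat) : {poly R} :=
  \sum_(s : 'S_N.+1 | nat_of_ord (s ord_max) == k)
     (-1) ^+ s * \prod_(i < N) (g i)^`(s (widen_ord (leqnSn N) i)).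

(* Coefficient of u^{-j} in the expansion at u = infinity of p(u)/q(u):
   the constant term of the polynomial part of u^j p / q. *)
Definition laurent_coef (R : idomainType) (p q : {poly R}) (j : nat) : R :=
  ((p * 'X^j) %/ q)`_0.

(* D = (1/Wr) rdet(...) = d^N + sum_i F_i(u) d^{N-i};
   F_i = rdet_coef (N-i) / Wr, and F_{ij} = coefficient of u^{-j} in F_i. *)
Definition Fcoef (R : idomainType) (N : nat) (lam : 'I_N -> nat)
    (f : 'I_N -> nat -> R) (i j : nat) : R :=
  laurent_coef (rdet_coef (fpoly lam f) (N - i)) (wronskian (fpoly lam f)) j.

Definition chi (R : idomainType) (N : nat) (lam : 'I_N -> nat)
    (f : 'I_N -> nat -> R) : {poly R} :=
  \prod_(j < N) ('X - (j%:R)%:P) +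
  \sum_(1 <= i < N.+1) (Fcoef lam f i i)%:P * \prod_(j < N - i) ('X - (j%:R)%:P).

(* Main.v *)
From HB Require Import structures.
Require Import Defs.
From mathcomp Require Import all_boot all_order all_algebra all_fingroup.
From mathcomp Require Import zify.
Set Implicit Arguments. Unset Strict Implicit. Unset Printing Implicit Defensive.
Import GRing.Theory.
Local Open Scope ring_scope.

Section RC.
Variables (R : comNzRingType) (N : nat) (G : 'I_N -> nat -> R).

Definition rc (k : nat) : R :=
  \sum_(s : 'S_N.+1 | nat_of_ord (s ord_max) == k)
     (-1) ^+ s * \prod_(i < N) G i (s (widen_ord (leqnSn N) i)).

Definition Mmat (v : 'I_N.+1 -> R) : 'M[R]_N.+1 :=
  \matrix_(i, j) (if unlift ord_max i is Some k then G k j else v j).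

Lemma unlift_widen (i : 'I_N) : unlift ord_max (widen_ord (leqnSn N) i) = Some i.
Proof.
have -> : widen_ord (leqnSn N) i = lift ord_max i by apply: val_inj; rewrite [RHS]lift_max.
by rewrite liftK.
Qed.

Lemma detMmat v : \det (Mmat v) = \sum_(j < N.+1) rc j * v j.
Proof.
rewrite /determinant.
transitivity (\sum_(s : 'S_N.+1) \sum_(j < N.+1) (nat_of_ord (s ord_max) == j)%:R *
   ((-1) ^+ s * \prod_(i < N) G i (s (widen_ord (leqnSn N) i)) * v j)).
  apply: eq_bigr => s _; rewrite [RHS](bigD1 (s ord_max)) //=; rewrite eqxx mul1r [X in _ + X]big1 ?addr0; last first.
    by move=> j Hj; case: eqP => [E|_]; [move/val_inj: E => E; rewrite E eqxx in Hj | rewrite mul0r].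
  rewrite big_ord_recr /= mulrA; congr (_ * _ * _).
    by apply: eq_bigr => i _; rewrite !mxE unlift_widen.
  by rewrite mxE unlift_none.
rewrite exchange_big /=; apply: eq_bigr => j _.
rewrite /rc big_distrl /= [RHS]big_mkcond /=; apply: eq_bigr => s _.
by case: eqP => _; rewrite ?mul1r ?mul0r.
Qed.

Lemma rc_alt (k : 'I_N) : \sum_(j < N.+1) rc j * G k j = 0.
Proof.
rewrite -(detMmat (fun j => G k j)).
apply: (@determinant_alternate _ _ _ ord_max (widen_ord (leqnSn N) k)).
  by rewrite -val_eqE /= neq_ltn ltn_ord orbT.
by move=> j; rewrite !mxE unlift_none unlift_widen.
Qed.

Lemma rc_N : rc N = \det (\matrix_(i < N, j < N) G i j).
Proof.
have := detMmat (fun j => (j == ord_max)%:R).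
rewrite (bigD1 ord_max) //= eqxx mulr1 big1 ?addr0; last first.
  by move=> j /negPf ->; rewrite mulr0.
move <-; rewrite (expand_det_row _ ord_max) (bigD1 ord_max) //= big1 ?addr0; last first.
  by move=> j /negPf; rewrite !mxE unlift_none => ->; rewrite mul0r.
rewrite !mxE unlift_none eqxx mul1r /cofactor -signr_odd addnn odd_double expr0 mul1r.
congr (\det _); apply/matrixP => i j; rewrite !mxE liftK.
by congr (G i _); rewrite lift_max.
Qed.
End RC.
Section Top.
Variable R : comNzRingType.
Implicit Types p q : {poly R}.

Lemma coefDX p j n : (p^`(j) * 'X^j)`_n = p`_n *+ (n ^_ j).
Proof.
rewrite coefMXn; case: ltnP => h; first by rewrite ffact_small // mulr0n.
by rewrite coef_derivn subnKC.
Qed.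

Lemma sizeDX p j : (size (p^`(j) * 'X^j)%R <= size p)%N.
Proof.
apply/leq_sizeP => n hn; rewrite coefDX.
by rewrite (nth_default _ hn) mul0rn.
Qed.

Lemma topmul p q a b : (size p <= a.+1)%N -> (size q <= b.+1)%N ->
  (size (p * q)%R <= (a + b).+1)%N /\ (p * q)`_(a + b) = p`_a * q`_b.
Proof.
move=> hp hq; split.
  apply: leq_trans (size_mul_leq _ _) _.
  lia.
rewrite coefM (bigD1 (Ordinal (leq_addr b a.+1))) //= addKn big1 ?addr0 //.
move=> j /negP hj; have hja : (j : nat) <> a by move=> E; apply: hj; apply/eqP/val_inj.
case: (ltngtP j a) => h; last by case: hja.
  by rewrite [q`_ _]nth_default ?mulr0 //; apply: leq_trans hq _; rewrite ltn_subRL ltn_add2r.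
by rewrite [p`_ _]nth_default ?mul0r //; apply: leq_trans hp _.
Qed.

Lemma topprod (I : Type) (r : seq I) (h : I -> {poly R}) (e : I -> nat) :
  (forall i, (size (h i) <= (e i).+1)%N) ->
  (size (\prod_(i <- r) h i)%R <= (\sum_(i <- r) e i)%N.+1)%N /\
  (\prod_(i <- r) h i)`_(\sum_(i <- r) e i)%N = \prod_(i <- r) (h i)`_(e i).
Proof.
move=> he; elim: r => [|x r [IH1 IH2]].
  by rewrite !big_nil size_poly1 coef1.
rewrite !big_cons; have [H1 H2] := topmul (he x) IH1.
by rewrite H2 IH2.
Qed.

End Top.

Section Main.
Variables (R : idomainType) (N : nat) (lam : 'I_N -> nat) (f : 'I_N -> nat -> R).

Local Notation g := (fpoly lam f).
Local Notation d := (dseq lam).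

Lemma fpoly_top i : (size (g i) <= (d i).+1)%N /\ (g i)`_(d i) = 1.
Proof.
set r := \sum_(1 <= j < (d i).+1 | ~~ inP lam (d i - j)%N) (f i j)%:P * 'X^(d i - j).
have hr : (size r <= d i)%N.
  rewrite /r big_seq_cond; apply: (big_ind (fun p : {poly R} => (size p <= d i)%N)).
  - by rewrite size_poly0.
  - by move=> x y hx hy; apply: leq_trans (size_polyD _ _) _; rewrite geq_max hx hy.
  move=> j /andP [hj _]; move: hj; rewrite mem_index_iota => /andP [h1 h2].
  apply: leq_trans (size_mul_leq _ _) _; rewrite size_polyXn.
  have := size_polyC_leq1 (f i j); lia.
have hg : g i = 'X^(d i) + r by [].
rewrite hg; split.
  by apply: leq_trans (size_polyD _ _) _; rewrite geq_max size_polyXn leqnn /= ltnW.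
by rewrite coefD coefXn eqxx (nth_default _ hr) addr0.
Qed.

Definition Gn (k : 'I_N) (j : nat) : R := ((d k) ^_ j)%:R.
Definition Ssum : nat := (\sum_(j < N.+1) (j : nat))%N.
Definition Esum : nat := (\sum_(k < N) d k)%N.

Lemma perm_sum (s : 'S_N.+1) :
  ((\sum_(i < N) s (widen_ord (leqnSn N) i)) + s ord_max)%N = Ssum.
Proof.
rewrite /Ssum (reindex_inj (@perm_inj _ s)) /= big_ord_recr /=.
by [].
Qed.

Lemma topc (m : nat) :
  (size (rdet_coef g m * 'X^(Ssum - m))%R <= Esum.+1)%N /\
  (rdet_coef g m * 'X^(Ssum - m))`_Esum = rc Gn m.
Proof.
have E : rdet_coef g m * 'X^(Ssum - m)%N =
  \sum_(s : 'S_N.+1 | nat_of_ord (s ord_max) == m)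
     (-1) ^+ s * \prod_(i < N) ((g i)^`(s (widen_ord (leqnSn N) i)) * 'X^(s (widen_ord (leqnSn N) i))).
  rewrite /rdet_coef big_distrl; apply: eq_bigr => s /eqP hs.
  rewrite big_split /= prodrXr mulrA; congr (_ * _ * 'X^_).
  by rewrite -(perm_sum s) hs addnK.
have T (s : 'S_N.+1) : (size (\prod_(i < N) ((g i)^`(s (widen_ord (leqnSn N) i)) * 'X^(s (widen_ord (leqnSn N) i))))%R <= Esum.+1)%N /\
   (\prod_(i < N) ((g i)^`(s (widen_ord (leqnSn N) i)) * 'X^(s (widen_ord (leqnSn N) i))))`_Esum
   = \prod_(i < N) Gn i (s (widen_ord (leqnSn N) i)).
  have [h1 h2] := topprod (R := R) (h := fun i => (g i)^`(s (widen_ord (leqnSn N) i)) * 'X^(s (widen_ord (leqnSn N) i))) (e := fun i => d i)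
     (index_enum 'I_N) (fun i => leq_trans (sizeDX _ _) (proj1 (fpoly_top i))).
  split; first exact: h1.
  rewrite /Esum h2; apply: eq_bigr => i _.
  by rewrite coefDX (proj2 (fpoly_top i)) /Gn.
rewrite E; split.
  apply: (big_ind (fun p : {poly R} => (size p <= Esum.+1)%N)).
  - by rewrite size_poly0.
  - by move=> x y hx hy; apply: leq_trans (size_polyD _ _) _; rewrite geq_max hx hy.
  by move=> s _; rewrite mulr_sign; case: ifP => _; rewrite ?size_polyN; apply: (proj1 (T s)).
rewrite coef_sum /rc; apply: eq_bigr => s _.
by rewrite !mulr_sign; case: ifP => _; rewrite ?coefN (proj2 (T s)).
Qed.


Lemma laurent0 (p q : {poly R}) (t E : nat) (a w : R) :
  (size (p * 'X^t)%R <= E.+1)%N -> (p * 'X^t)`_E = a ->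
  (size (q * 'X^t)%R <= E.+1)%N -> (q * 'X^t)`_E = w -> w \is a GRing.unit ->
  (p %/ q)`_0 = a / w.
Proof.
move=> hp ha hq hw uw.
have w0 : w != 0 by apply/eqP => w0; move: uw; rewrite w0 unitr0.
have sq : size (q * 'X^t) = E.+1.
  apply/eqP; rewrite eqn_leq hq /=; rewrite -hw in w0.
  by apply: contraNT w0; rewrite -ltnNge ltnS => hs; rewrite nth_default.
have q0 : q != 0 by apply/eqP => q0; move: sq; rewrite q0 mul0r size_poly0.
have lq : lead_coef q = w.
  by rewrite -hw -[lead_coef q]mulr1 -(lead_coefXn R t) -lead_coefM lead_coefE sq.
set r := p - (a / w)%:P * q.
have hr : (size (r * 'X^t)%R <= E)%N.
  apply/leq_sizeP => j; rewrite /r mulrBl coefB -mulrA coefCM.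
  rewrite leq_eqVlt => /orP [/eqP <- | hj].
    by rewrite ha hw divrK // subrr.
  by rewrite !nth_default ?mulr0 ?subr0 //; apply: leq_trans hj; [exact: hq | exact: hp].
have srq : (size r < size q)%N.
  have [->|r0] := eqVneq r 0; first by rewrite size_poly0 lt0n size_poly_eq0.
  move: hr; rewrite size_mulXn //; have := size_mulXn t q0; rewrite sq; lia.
have ulq : lead_coef q \in GRing.unit by rewrite lq.
have ep : p = (a / w)%:P * q + r by rewrite /r addrC subrK.
have [<- _] := Pdiv.IdomainUnit.edivpP ulq ep srq.
by rewrite coefC.
Qed.


Definition Pj (j : nat) : {poly R} := \prod_(t < j) ('X - ((t : nat)%:R)%:P).

Lemma size_Pj j : size (Pj j) = j.+1.
Proof. by rewrite /Pj size_prod_XsubC -[index_enum _]enumT -cardT card_ord. Qed.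

Lemma Pj_top j : (Pj j)`_j = 1.
Proof.
have := monic_prod_XsubC (index_enum 'I_j) xpredT (fun t : 'I_j => ((t : nat)%:R : R)).
by rewrite -/(Pj j) monicE lead_coefE size_Pj => /eqP.
Qed.

Lemma hornerPj (x j : nat) : (Pj j).[x%:R] = (x ^_ j)%:R.
Proof.
rewrite /Pj horner_prod.
under eq_bigr do rewrite hornerXsubC.
elim: j => [|j IH]; first by rewrite big_ord0 ffactn0.
rewrite big_ord_recr /= IH ffactnSr natrM.
case: (leqP j x) => h; first by rewrite natrB.
by rewrite ffact_small // mulr0n !mul0r.
Qed.

Lemma unit_det (hdec : forall i j : 'I_N, (i < j)%N -> (d j < d i)%N)
  (hu : forall n : nat, (n.+1)%:R \is a @GRing.unit R) :
  \det (\matrix_(i < N, j < N) Gn i j) \is a GRing.unit.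
Proof.
have -> : \matrix_(i < N, j < N) Gn i j =
   (Vandermonde N (\row_i ((d i)%:R : R)))^T *m (\matrix_(l < N, j < N) (Pj j)`_l).
  apply/matrixP => i j; rewrite !mxE /Gn -hornerPj.
  rewrite (horner_coef_wide _ (_ : (size (Pj j) <= N)%N)); last by rewrite size_Pj.
  by apply: eq_bigr => l _; rewrite !mxE mulrC.
rewrite det_mulmx det_tr det_Vandermonde -det_tr det_trig; last first.
  apply/forallP => i; apply/forallP => j; apply/implyP => hij.
  by rewrite !mxE nth_default // size_Pj.
rewrite [X in _ * X]big1 ?mulr1; last by move=> i _; rewrite !mxE Pj_top.
apply: unitr_prod => i _; apply: unitr_prod => j hij; rewrite !mxE.
have hl := hdec _ _ hij.
rewrite -opprB -natrB ?(ltnW hl) // unitrN.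
have -> : (d i - d j = (d i - d j).-1.+1)%N by rewrite prednK // subn_gt0.
exact: hu.
Qed.


Lemma rev_sum (h : nat -> R) :
  \sum_(1 <= i < N.+1) h (N - i)%N = \sum_(j < N) h j.
Proof.
rewrite big_add1 /= big_nat_rev /=.
transitivity (\sum_(0 <= j < N) h j); last by rewrite big_mkord.
apply: eq_big_nat => i /andP [_ hi].
by congr h; lia.
Qed.

Section Hyps.
Hypothesis hu : forall n : nat, (n.+1)%:R \is a @GRing.unit R.
Hypothesis hlam : forall i j : 'I_N, (i <= j)%N -> (lam j <= lam i)%N.

Lemma hdec (i j : 'I_N) : (i < j)%N -> (d j < d i)%N.
Proof.
move=> hij; have := hlam (ltnW hij); have := ltn_ord j; rewrite /dseq; lia.
Qed.

Lemma natr_neq (a b : nat) : (a < b)%N -> (a%:R : R) != b%:R.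
Proof.
move=> hab; rewrite eq_sym -subr_eq0 -natrB ?(ltnW hab) //.
have -> : (b - a = (b - a).-1.+1)%N by rewrite prednK // subn_gt0.
by apply/eqP => h; have := hu (b - a).-1; rewrite h unitr0.
Qed.

Lemma d_inj : injective (fun k : 'I_N => ((d k)%:R : R)).
Proof.
move=> i j /= h; case: (ltngtP i j) => hij; last exact: val_inj.
  by move: (natr_neq (hdec hij)); rewrite h eqxx.
by move: (natr_neq (hdec hij)); rewrite h eqxx.
Qed.

Lemma SN : (N <= Ssum)%N.
Proof. by rewrite -(perm_sum 1) perm1 /= leq_addl. Qed.

Lemma wr_eq : wronskian g = rdet_coef g N.
Proof. exact: (esym (rc_N (fun i j => (g i)^`(j)))). Qed.

Lemma w_unit : rc Gn N \is a GRing.unit.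
Proof. by rewrite rc_N; apply: unit_det => //; exact: hdec. Qed.

Lemma Fii (i : nat) : (1 <= i <= N)%N ->
  Fcoef lam f i i = rc Gn (N - i) / rc Gn N.
Proof.
move=> /andP [h1 h2].
rewrite /Fcoef /laurent_coef.
have e : ((i + (Ssum - N)) = Ssum - (N - i))%N by have := SN; lia.
have [a1 a2] := topc (N - i); have [b1 b2] := topc N.
rewrite -wr_eq in b1 b2.
apply: (laurent0 (t := (Ssum - N)%N) (E := Esum)).
- by rewrite -mulrA -exprD e.
- by rewrite -mulrA -exprD e.
- exact: b1.
- exact: b2.
- exact: w_unit.
Qed.


Lemma chiE : chi lam f = Pj N + \sum_(1 <= i < N.+1) (Fcoef lam f i i)%:P * Pj (N - i).
Proof. by []. Qed.

Lemma chi_root (k : 'I_N) : (chi lam f).[(d k)%:R] = 0.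
Proof.
have wu := w_unit.
have w0 : rc Gn N != 0 by apply/eqP => h; move: wu; rewrite h unitr0.
apply: (mulfI w0); rewrite mulr0.
rewrite chiE hornerD horner_sum mulrDr mulr_sumr hornerPj.
rewrite -[RHS](rc_alt Gn k) big_ord_recr /= addrC /Gn; congr (_ + _).
rewrite -(rev_sum (fun j => rc Gn j * ((d k) ^_ j)%:R)).
rewrite big_nat_cond [RHS]big_nat_cond; apply: eq_bigr => i /andP [/andP [h1 h2] _].
rewrite hornerCM hornerPj Fii; last by rewrite h1 -ltnS.
by rewrite mulrA [rc Gn N * _]mulrC divrK.
Qed.

Lemma main_eq : chi lam f = \prod_(i < N) ('X - ((d i)%:R)%:P).
Proof.
set Q := chi lam f - \prod_(i < N) ('X - ((d i)%:R)%:P).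
have top : forall j, (N <= j)%N -> (chi lam f)`_j = (j == N)%:R.
  move=> j hj; rewrite chiE coefD coef_sum big_nat_cond big1 ?addr0; last first.
    move=> i /andP [/andP [h1 h2] _]; rewrite coefCM nth_default ?mulr0 //.
    by rewrite size_Pj; lia.
  case: (ltngtP j N) hj => // [hj _ | -> _]; last by rewrite Pj_top.
  by rewrite nth_default ?size_Pj.
have top2 : forall j, (N <= j)%N -> (\prod_(i < N) ('X - ((d i)%:R : R)%:P))`_j = (j == N)%:R.
  have sz : size (\prod_(i < N) ('X - ((d i)%:R : R)%:P)) = N.+1.
    by rewrite size_prod_XsubC -[index_enum _]enumT -cardT card_ord.
  move=> j hj; case: (ltngtP j N) hj => // [hj _ | -> _].
    by rewrite nth_default ?sz.
  have := monic_prod_XsubC (index_enum 'I_N) xpredT (fun i : 'I_N => ((d i)%:R : R)).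
  by rewrite monicE lead_coefE sz /= => /eqP ->.
have sQ : (size Q <= N)%N.
  by apply/leq_sizeP => j hj; rewrite /Q coefB top // top2 // subrr.
apply/eqP; rewrite -subr_eq0 -/Q; apply/negPn/negP => Q0.
have := max_poly_roots Q0 (rs := [seq ((d k)%:R : R) | k <- enum 'I_N]).
rewrite size_map size_enum_ord => H.
have : (N < size Q)%N.
  apply: H; last by rewrite map_inj_uniq ?enum_uniq //; exact: d_inj.
  apply/allP => x /mapP [k _ ->]; rewrite /root /Q hornerD hornerN chi_root.
  rewrite horner_prod (bigD1 k) //= hornerXsubC subrr mul0r.
  by rewrite oppr0 addr0.
by rewrite ltnNge sQ.
Qed.

End Hyps.
End Main.

Unset Implicit Arguments. Set Strict Implicit. Set Printing Implicit Defensive.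

Theorem lemma3p3 (R : idomainType) (N : nat) (lam : 'I_N -> nat)
    (f : 'I_N -> nat -> R) :
  (forall n : nat, (n.+1)%:R \is a @GRing.unit R) ->
  (forall i j : 'I_N, (i <= j)%N -> (lam j <= lam i)%N) ->
  chi lam f = \prod_(i < N) ('X - ((dseq lam i)%:R)%:P).
Proof.
move=> hu hlam; exact: (@main_eq R N lam f hu hlam).
Qed.
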